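(* Let $\mathcal{I}$ be an ideal on $\omega$, let $\mathcal{A}=\{A_\alpha:\alpha<\mathfrak{c}\}$ be an almost disjoint family on $\omega$, let $\mathcal{I}^+=\{B_\alpha:\alpha<\mathfrak{c}\}$ be an enumeration, and let $\{P_n:n\in\omega\}$ be a partition of $\omega$ with $P_n\in\mathcal{I}$ for all $n$. Let $\rho^{(\mathcal{I})}$ be the associated function. Then: (1) $\rho^{(\mathcal{I})}$ is partition regular; (2) $\mathcal{I}_{\rho^{(\mathcal{I})}}=\mathcal{I}$; (3) $\rho^{(\mathcal{I})}$ has small accretions; (4) if $\mathcal{I}\in P^-$, then $\rho^{(\mathcal{I})}\in P^-$; (5) $\rho^{(\mathcal{I})}\in(S_2)$.
   Context: An ideal on $\omega$: $\mathcal{I}\subseteq\mathcal{P}(\omega)$ with $\emptyset\in\mathcal{I}$, $\omega\notin\mathcal{I}$, closed under finite unions and subsets, containing all finite sets; $\mathcal{I}^+=\mathcal{P}(\omega)\setminus\mathcal{I}$. An almost disjoint family on $\omega$ is a family of infinite subsets of $\omega$ any two distinct members of which have finite intersection (here the $A_\alpha$ are pairwise distinct). Definition of $\rho^{(\mathcal{I})}$: let $\overline{\mathcal{A}}=\{A\setminus K:A\in\mathcal{A},K\in[\omega]^{<\omega}\}$ and define $\rho^{(\mathcal{I})}\colon\overline{\mathcal{A}}\to[\omega]^\omega$ by $\rho^{(\mathcal{I})}(A_\alpha\setminus K)=B_\alpha\setminus\bigcup\{P_n:n<\max(K\cap A_\alpha)\}$, with the convention $\max\emptyset=0$. Partition regular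 function: $\Lambda,\Omega$ countably infinite, $\mathcal{F}$ a nonempty family of infinite subsets of $\Omega$ with $F\setminus K\in\mathcal{F}$ for $F\in\mathcal{F}$, $K$ finite; $\rho\colon\mathcal{F}\to[\Lambda]^\omega$ is partition regular if (M) $E\subseteq F\Rightarrow\rho(E)\subseteq\rho(F)$; (R) if $F\in\mathcal{F}$ and $\rho(F)=A\cup B$ then some $E\in\mathcal{F}$ has $\rho(E)\subseteq A$ or $\rho(E)\subseteq B$; (S) for every $E\in\mathcal{F}$ there is $F\in\mathcal{F}$, $F\subseteq E$, such that every $a\in\rho(F)$ satisfies $a\notin\rho(F\setminus K)$ for some finite $K\subseteq\Omega$. $\mathcal{I}_\rho=\{A\subseteq\Lambda:\forall F\in\mathcal{F}\ \rho(F)\not\subseteq A\}$. $\rho$ has small accretions if for every $E\in\mathcal{F}$ there is $F\in\mathcal{F}$, $F\subseteq E$, with $\rho(F)\setminus\rho(F\setminus K)\in\mathcal{I}_\rho$ for every finite $K\subseteq\Omega$. $\rho\in P^-$: for every decreasing $A_0\supseteq A_1\supseteq\dots$ of subsets of $\Lambda$ with $A_0\notin\mathcal{I}_\rho$ and $A_n\setminus A_{n+1}\in\mathcal{I}_\rho$, there is $F\in\mathcal{F}$ with $\rho(F)\subseteq A_0$ such that for each $n$ some finite $K\subseteq\Omega$ has $\rho(F\setminus K)\subseteq A_n$. For an ideal $\mathcal{I}$, $\mathcal{I}\in P^-$ means $\rho_{\mathcal{I}}\in P^-$, where $\rho_{\mathcal{I}}\colon\mathcal{I}^+\to[\omega]^\omega$,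 $\rho_{\mathcal{I}}(A)=A$; equivalently, for every decreasing $A_0\supseteq A_1\supseteq\dots$ with $A_0\in\mathcal{I}^+$ and $A_n\setminus A_{n+1}\in\mathcal{I}$ there is $B\in\mathcal{I}^+$, $B\subseteq A_0$, with $B\setminus A_n$ finite for all $n$. $\rho\in(S_2)$: for every $E\in\mathcal{F}$ there is $F\in\mathcal{F}$, $F\subseteq E$, such that for every $B\subseteq\rho(F)$ with $B\notin\mathcal{I}_\rho$ there is $G\in\mathcal{F}$ with $\rho(G)\subseteq B$ and for every finite $K\subseteq\Omega$ there is a finite $L\subseteq\Omega$ with $\rho(G\setminus L)\subseteq\rho(F\setminus K)$. *)

(* Defs.v *)
From mathcomp Require Import all_boot.
From mathcomp Require Import boolp classical_sets cardinality.
Set Implicit Arguments. Unset Strict Implicit. Unset Printing Implicit Defensive.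
Local Open Scope classical_set_scope.

Definition is_ideal (I : set (set nat)) : Prop :=
  [/\ I set0, ~ I setT,
      (forall X Y, I X -> I Y -> I (X `|` Y)),
      (forall X Y, Y `<=` X -> I X -> I Y) &
      (forall X, finite_set X -> I X)].

Definition almost_disjoint_family (T : Type) (A : T -> set nat) : Prop :=
  [/\ (forall a, infinite_set (A a)), injective A &
      (forall a b, a <> b -> finite_set (A a `&` A b))].

Definition is_partition (P : nat -> set nat) : Prop :=
  [/\ (forall n, P n !=set0),
      (forall n m, n <> m -> P n `&` P m = set0) &
      (forall x, exists n, P n x)].

Definition barA (T : Type) (A : T -> set nat) : set (set nat) :=
  [set E | exists a K, finite_set K /\ E = A a `\` K].

(* rho^(I)(A_a \ K) = B_a \ U{P_n : n < max (K cap A_a)}, max set0 = 0.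
   Note n < max(K cap A_a) (with max set0 = 0) iff exists k in K cap A_a, n < k
   (K finite); this is how the index set is written below.
   The representation (a, K) is chosen classically; the value does not depend
   on it when A is an almost disjoint family of distinct sets.
   Outside barA the value is irrelevant (set to set0). *)
Definition rhoI (T : Type) (A B : T -> set nat) (P : nat -> set nat)
    (E : set nat) : set nat :=
  match pselect (exists aK : T * set nat, finite_set aK.2 /\ E = A aK.1 `\` aK.2)
  with
  | left h => let aK := projT1 (cid h) in
      B aK.1 `\` \bigcup_(n in [set n | exists k, aK.2 k /\ A aK.1 k /\ (n < k)%N]) P n
  | right _ => set0
  end.

(* Partition regular functions with Lambda = Omega = nat.
   Fam is the domain family, rho is given as a total function whose
   values outside Fam are irrelevant. *)
Definition partition_regular (Fam : set (set nat)) (rho : set nat -> set nat) : Prop :=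
  [/\ (Fam !=set0 /\
       (forall F, Fam F -> infinite_set F) /\
       (forall F K, Fam F -> finite_set K -> Fam (F `\` K))),
      (forall F, Fam F -> infinite_set (rho F)),
      (forall E F, Fam E -> Fam F -> E `<=` F -> rho E `<=` rho F),
      (forall F X Y, Fam F -> rho F = X `|` Y ->
         exists2 E, Fam E & (rho E `<=` X \/ rho E `<=` Y)) &
      (forall E, Fam E -> exists2 F, Fam F /\ F `<=` E &
         forall a, rho F a -> exists K, finite_set K /\ ~ rho (F `\` K) a)].

Definition I_rho (Fam : set (set nat)) (rho : set nat -> set nat) : set (set nat) :=
  [set X | forall F, Fam F -> ~ (rho F `<=` X)].

Definition small_accretions (Fam : set (set nat)) (rho : set nat -> set nat) : Prop :=
  forall E, Fam E -> exists2 F, Fam F /\ F `<=` E &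
    forall K, finite_set K -> I_rho Fam rho (rho F `\` rho (F `\` K)).

Definition Pminus (Fam : set (set nat)) (rho : set nat -> set nat) : Prop :=
  forall An : nat -> set nat,
    (forall n, An n.+1 `<=` An n) ->
    ~ I_rho Fam rho (An 0) ->
    (forall n, I_rho Fam rho (An n `\` An n.+1)) ->
    exists2 F, Fam F /\ rho F `<=` An 0 &
      forall n, exists K, finite_set K /\ rho (F `\` K) `<=` An n.

(* I in P^- means rho_I in P^-, rho_I : I^+ -> [omega]^omega, rho_I A = A *)
Definition ideal_Pminus (I : set (set nat)) : Prop := Pminus (~` I) id.

Definition S2 (Fam : set (set nat)) (rho : set nat -> set nat) : Prop :=
  forall E, Fam E -> exists2 F, Fam F /\ F `<=` E &
    forall X, X `<=` rho F -> ~ I_rho Fam rho X ->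
      exists2 G, Fam G /\ rho G `<=` X &
        forall K, finite_set K -> exists L, finite_set L /\
          rho (G `\` L) `<=` rho (F `\` K).

(* Main.v *)
Require Import Defs.
From mathcomp Require Import all_boot.
From mathcomp Require Import boolp classical_sets cardinality.
From mathcomp Require Import zify.
Set Implicit Arguments. Unset Strict Implicit. Unset Printing Implicit Defensive.
Local Open Scope classical_set_scope.

Lemma finite_bound (X : set nat) : finite_set X -> exists M, forall x, X x -> (x < M)%N.
Proof.
move/finite_seqP => [s ->]; elim: s => [|y s [M HM]]; first by exists 0.
exists (maxn y.+1 M) => x /=; rewrite inE => /orP [/eqP ->|xs]; first by lia.
have := HM x xs; lia.
Qed.

Lemma infinite_above (X : set nat) N : infinite_set X -> exists k, X k /\ (N < k)%N.
Proof.
move=> inf; apply: contrapT => H; apply: inf; apply: sub_finite_set (finite_II N.+1).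
move=> x Xx /=; apply: contrapT => nlt; apply: H; exists x; split => //; lia.
Qed.

Lemma ideal_U (I : set (set nat)) (P : nat -> set nat) : is_ideal I -> (forall n, I (P n)) ->
  forall M, I (\bigcup_(n in `I_M) P n).
Proof.
move=> [I0 _ IU Isub _] IP; elim => [|M IH].
  by apply: (Isub _ _ _ I0) => x [n] /=; rewrite ltn0.
apply: (Isub _ _ _ (IU _ _ IH (IP M))) => x [n] /= nM Pnx.
have [nM'|nM'] := ltnP n M; first by left; exists n.
by right; have <- : n = M by lia.
Qed.

Lemma ideal_Uidx (T : Type) (A : T -> set nat) (I : set (set nat)) (P : nat -> set nat) a K :
  is_ideal I -> (forall n, I (P n)) -> finite_set K ->
  I (\bigcup_(n in [set n | exists k, K k /\ A a k /\ (n < k)%N]) P n).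
Proof.
move=> hI IP fK; have [M HM] := finite_bound fK.
have [_ _ _ Isub _] := hI.
apply: Isub (ideal_U hI IP M) => x [n [k [Kk [Ak lt]]] Pnx]; exists n => //=.
have := HM k Kk; lia.
Qed.

Lemma rho_pos (I : set (set nat)) (X U : set nat) : is_ideal I -> ~ I X -> I U -> ~ I (X `\` U).
Proof.
move=> [_ _ IU Isub _] nX IU' h; apply: nX; apply: Isub (IU _ _ h IU') => x Xx.
by have [Ux|Ux] := pselect (U x); [right|left].
Qed.

Lemma ideal_infinite (I : set (set nat)) X : is_ideal I -> ~ I X -> infinite_set X.
Proof. by move=> [_ _ _ _ If] nX fX; apply: nX; apply: If. Qed.

Lemma rho_eq (T : Type) (A B : T -> set nat) (P : nat -> set nat) a K :
  almost_disjoint_family A -> finite_set K ->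
  rhoI A B P (A a `\` K) =
  B a `\` \bigcup_(n in [set n | exists k, K k /\ A a k /\ (n < k)%N]) P n.
Proof.
move=> [Ainf Ainj Aad] fK; rewrite /rhoI; case: pselect => [h|h]; last first.
  by exfalso; apply: h; exists (a, K).
case: (cid h) => [[a' K'] /= [fK' E]] /=.
have aa : a' = a.
  apply: contrapT => ne; apply: (infinite_setD (Ainf a) fK).
  apply: sub_finite_set (Aad _ _ ne) => x Hx; split; last by case: Hx.
  by rewrite E in Hx; case: Hx.
subst a'; congr (_ `\` _); apply/seteqP; split => x [n [k [Kk [Ak lt]]] Px];
  exists n => //; exists k; split => //; apply: contrapT => nK.
- have : (A a `\` K) k by split.
  by rewrite E => -[].
- have : (A a `\` K') k by split.
  by rewrite -E => -[].
Qed.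

Lemma rho_A0 (T : Type) (A B : T -> set nat) (P : nat -> set nat) a :
  almost_disjoint_family A -> rhoI A B P (A a) = B a.
Proof.
move=> hA; have := rho_eq B P a hA (finite_set0 nat); rewrite setD0 => ->.
apply/seteqP; split; first by move=> x [].
by move=> x Bx; split => // -[n [k []]].
Qed.

Lemma ad_eq (T : Type) (A : T -> set nat) a b K K' :
  almost_disjoint_family A -> finite_set K ->
  A a `\` K `<=` A b `\` K' -> a = b.
Proof.
move=> [Ainf _ Aad] fK sub; apply: contrapT => ne.
apply: (infinite_setD (Ainf a) fK); apply: sub_finite_set (Aad _ _ ne) => x Hx.
by split; [case: Hx | by case: (sub _ Hx)].
Qed.

Theorem proposition5p2 (T : Type) (I : set (set nat)) (A B : T -> set nat)
  (P : nat -> set nat) :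
  is_ideal I ->
  almost_disjoint_family A ->
  (forall a, ~ I (B a)) -> (forall X, ~ I X -> exists a, B a = X) ->
  is_partition P -> (forall n, I (P n)) ->
  [/\ partition_regular (barA A) (rhoI A B P),
      I_rho (barA A) (rhoI A B P) = I,
      small_accretions (barA A) (rhoI A B P),
      (ideal_Pminus I -> Pminus (barA A) (rhoI A B P)) &
      S2 (barA A) (rhoI A B P)].
Proof.
move=> hI hA nIB surjB [Pne Pdis Pcov] IP.
have hI' := hI; move: hI' => [I0 IT IU Isub Ifin].
have hA' := hA; move: hA' => [Ainf Ainj Aad].
have rhoE := fun a K (fK : finite_set K) => rho_eq B P a hA fK.
have rho0 := fun a => rho_A0 B P a hA.
have bar0 : forall a, barA A (A a).
  by move=> a; exists a, set0; split; [exact: finite_set0 | rewrite setD0].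
have Irho : I_rho (barA A) (rhoI A B P) = I.
  apply/seteqP; split => X.
    move=> HX; apply: contrapT => nX; have [c Bc] := surjB X nX.
    by apply: (HX (A c) (bar0 c)); rewrite rho0 Bc.
  move=> IX F [a [K [fK ->]]]; rewrite rhoE // => sub.
  apply: (rho_pos hI (nIB a) (ideal_Uidx A a hI IP fK)).
  exact: Isub sub IX.
split.
- split.
  + split.
      have [a _] := surjB setT IT.
      by exists (A a).
    split.
      by move=> F [a [K [fK ->]]]; exact: infinite_setD.
    move=> F K' [a [K [fK ->]]] fK'; exists a, (K `|` K'); split.
      by rewrite finite_setU; split.
    by rewrite setDDl.
  + move=> F [a [K [fK ->]]]; rewrite rhoE //; apply: (ideal_infinite hI).
    exact: (rho_pos hI (nIB a) (ideal_Uidx A a hI IP fK)).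
  + move=> E F [a [K [fK ->]]] [b [K' [fK' ->]]] sub.
    have ab := ad_eq hA fK sub; subst b.
    rewrite !rhoE // => x [Bx nU]; split => // -[n [k [K'k [Ak lt]]] Px].
    apply: nU; exists n => //; exists k; split => //.
    apply: contrapT => nK; have : (A a `\` K) k by split.
    by move/sub => [].
  + move=> F X Y [a [K [fK ->]]]; rewrite rhoE // => eq.
    have [IX|nX] := pselect (I X); last first.
      have [c Bc] := surjB X nX; exists (A c) => //; left; by rewrite rho0 Bc.
    have [IY|nY] := pselect (I Y); last first.
      have [c Bc] := surjB Y nY; exists (A c) => //; right; by rewrite rho0 Bc.
    exfalso; apply: (rho_pos hI (nIB a) (ideal_Uidx A a hI IP fK)).
    by rewrite eq; apply: IU.
  + move=> E hE; exists E; first by split.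
    move: hE => [a [K [fK ->]]] x _.
    have [n Pnx] := Pcov x.
    have [k [Ak lt]] := infinite_above n (infinite_setD (Ainf a) fK).
    exists [set k]; split; first exact: finite_set1.
    rewrite setDDl rhoE; last by rewrite finite_setU; split => //; exact: finite_set1.
    move=> [_ nU]; apply: nU; exists n => //; exists k; split; first by right.
    by case: Ak.
- exact: Irho.
- move=> E hE; exists E; first by split.
  move: hE => [a [K [fK ->]]] K' fK'.
  have fKK : finite_set (K `|` K') by rewrite finite_setU.
  rewrite Irho setDDl !rhoE //.
  apply: Isub (ideal_Uidx A a hI IP fKK) => x [[Bx _] nn].
  apply: contrapT => nU; apply: nn; split => // -[n [k [Kk [Ak lt]]] Px].
- move=> hP An dec nI0 nIdiff.
  rewrite Irho in nI0 nIdiff.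
  have IrhoI : I_rho (~` I) id = I.
    apply/seteqP; split => X.
      by move=> HX; apply: contrapT => nX; apply: (HX X nX).
    by move=> IX F nF sub; apply: nF; exact: Isub sub IX.
  have h0 : ~ I_rho (~` I) id (An 0) by rewrite IrhoI.
  have h1 : forall n, I_rho (~` I) id (An n `\` An n.+1) by move=> n; rewrite IrhoI.
  have [F [nF sF] Hn] := hP An dec h0 h1.
  have [c Bc] := surjB F nF.
  exists (A c); first by split; [exact: bar0 | rewrite rho0 Bc].
  move=> n; have [K [fK sub]] := Hn n.
  pose f x := projT1 (cid (Pcov x)).
  have [N HN] := finite_bound (finite_image f fK).
  have [k [Ak lt]] := infinite_above N (Ainf c).
  exists [set k]; split; first exact: finite_set1.
  rewrite rhoE; last exact: finite_set1.
  move=> x [Bx nU]; apply: sub; split; first by rewrite -Bc.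
  move=> Kx; apply: nU; exists (f x); last exact: (projT2 (cid (Pcov x))).
  exists k; split => //; split => //.
  have := HN (f x) (ex_intro2 _ _ x Kx erefl); lia.
- move=> E hE; exists E; first by split.
  move: hE => [b [K0 [fK0 ->]]] X sX nX.
  rewrite Irho in nX.
  have [c Bc] := surjB X nX.
  exists (A c); first by split; [exact: bar0 | rewrite rho0 Bc].
  move=> K fK.
  have fKK : finite_set (K0 `|` K) by rewrite finite_setU.
  have [N HN] := finite_bound fKK.
  have [k [Ak lt]] := infinite_above N (Ainf c).
  exists [set k]; split; first exact: finite_set1.
  rewrite setDDl !rhoE //.
  rewrite rhoE // in sX.
  move=> x [Bcx nU].
  have Xx : X x by rewrite -Bc.
  have [Bbx _] := sX x Xx.
  split => // -[n [j [Kj [Aj ltj]]] Pn]; apply: nU; exists n => //; exists k.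
  split => //; split => //; have := HN j Kj; lia.
Qed.
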